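(* Let $X\subseteq Q^*(\mathcal{G})$ be a hereditary class. Then the clique-width of graphs in $X$ is bounded by a constant if and only if the clique-width of the $Q$-graphs belonging to $X$ is bounded by a constant.
   Context: All graphs are finite, simple and undirected; $\mathcal{G}$ denotes the class of all such graphs. A class is hereditary if closed under taking induced subgraphs. For a graph $G=(V,E)$, $Q(G)$ is the graph with vertex set $V\cup E$ in which $V$ is a clique, $E$ is a clique, and $v\in V$ is adjacent to $e\in E$ iff $v$ is an endpoint of $e$ in $G$. A $Q$-graph is a graph isomorphic to $Q(G)$ for some graph $G$. For a class $Y$, $Q(Y)=\{Q(G):G\in Y\}$ and $Q^*(Y)$ is the set of all induced subgraphs of graphs in $Q(Y)$. *)

(* Defs.v *)
From HB Require Import structures.
From mathcomp Require Import all_boot.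
Set Implicit Arguments. Unset Strict Implicit. Unset Printing Implicit Defensive.

Record sgraph := SGraph {
  vert : finType;
  adj : rel vert;
  adj_sym : symmetric adj;
  adj_irr : irreflexive adj }.

Definition induced_sub (H G : sgraph) : Prop :=
  exists f : vert H -> vert G, injective f /\
    forall x y, adj x y = adj (f x) (f y).

Definition isomorphic (H G : sgraph) : Prop :=
  exists f : vert H -> vert G, bijective f /\
    forall x y, adj x y = adj (f x) (f y).

Definition hereditary (X : sgraph -> Prop) : Prop :=
  forall G H, X G -> induced_sub H G -> X H.

Section QGraph.
Variable G : sgraph.
Let V := vert G.

Definition is_edge (A : {set V}) : bool :=
  [exists x, exists y, adj x y && (A == [set x; y])].

Definition Qvert : finType := (V + {A : {set V} | is_edge A})%type.

Definition Qadj : rel Qvert := fun a b =>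
  match a, b with
  | inl u, inl v => u != v
  | inr e, inr f => e != f
  | inl v, inr e => v \in val e
  | inr e, inl v => v \in val e
  end.

Lemma Qadj_sym : symmetric Qadj.
Proof. by case=> [u|e] [v|f] //=; rewrite eq_sym. Qed.

Lemma Qadj_irr : irreflexive Qadj.
Proof. by case=> [u|e] /=; rewrite eqxx. Qed.

Definition Q : sgraph := SGraph Qadj_sym Qadj_irr.
End QGraph.

Definition is_Qgraph (H : sgraph) : Prop := exists G : sgraph, isomorphic H (Q G).

(* Membership in Q^*(all graphs): induced subgraph of some Q(G). *)
Definition in_Qstar (H : sgraph) : Prop := exists G : sgraph, induced_sub H (Q G).

Definition sum_rel (V1 V2 : finType) (a1 : rel V1) (a2 : rel V2) : rel (V1 + V2)%type :=
  fun x y => match x, y with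
  | inl u, inl v => a1 u v
  | inr u, inr v => a2 u v
  | _, _ => false
  end.

Definition sum_lab (V1 V2 : finType) (l1 : V1 -> nat) (l2 : V2 -> nat) (x : (V1 + V2)%type) : nat :=
  match x with inl u => l1 u | inr v => l2 v end.

(* cwl k V a l : the labelled graph (V, a, l) is (isomorphic to) the value of
   a k-expression, i.e. it is built with labels in {0,..,k-1} from
   single labelled vertices by disjoint union, joins eta_{i,j} (i <> j)
   and relabellings rho_{i->j}.  The empty graph is allowed (clique-width 0). *)
Inductive cwl (k : nat) : forall V : finType, rel V -> (V -> nat) -> Prop :=
| cw_empty (V : finType) (a : rel V) (l : V -> nat) :
    #|V| = 0 -> cwl k a l
| cw_vertex (V : finType) (a : rel V) (l : V -> nat) :
    #|V| = 1 -> (forall x y, a x y = false) -> (forall x, l x < k) -> cwl k a l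
| cw_union (V1 V2 : finType) (a1 : rel V1) (l1 : V1 -> nat) (a2 : rel V2) (l2 : V2 -> nat) :
    cwl k a1 l1 -> cwl k a2 l2 -> cwl k (sum_rel a1 a2) (sum_lab l1 l2)
| cw_join (V : finType) (a : rel V) (l : V -> nat) (i j : nat) :
    i != j -> cwl k a l ->
    cwl k (fun x y => [|| a x y, (l x == i) && (l y == j) | (l x == j) && (l y == i)]) l
| cw_relab (V : finType) (a : rel V) (l : V -> nat) (i j : nat) :
    j < k -> cwl k a l -> cwl k a (fun x => if l x == i then j else l x)
| cw_iso (V W : finType) (a : rel V) (l : V -> nat) (b : rel W) (m : W -> nat) (f : V -> W) :
    bijective f -> (forall x y, b (f x) (f y) = a x y) -> (forall x, m (f x) = l x) ->
    cwl k a l -> cwl k b m.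

Definition cw_le (k : nat) (G : sgraph) : Prop :=
  exists l : vert G -> nat, cwl k (@adj G) l.

Definition cw_bounded (P : sgraph -> Prop) : Prop :=
  exists c : nat, forall G, P G -> cw_le c G.

(* Main.v *)
Require Import Defs.
From mathcomp Require Import all_boot zify.
Set Implicit Arguments. Unset Strict Implicit. Unset Printing Implicit Defensive.

Lemma cwl_ext k (V : finType) (a b : rel V) (l m : V -> nat) :
  (forall x y, b x y = a x y) -> (forall x, m x = l x) -> cwl k a l -> cwl k b m.
Proof.
move=> Hb Hm H; apply: (@cw_iso k V V a l b m id) => //; exact: (Bijective (g:=id)).
Qed.

Lemma cwl_lab k (V : finType) (a : rel V) l : cwl k a l -> forall x, l x < k.
Proof.
elim=> {V a l}.
- by move=> V a l H x; move: (max_card (pred1 x)); rewrite H card1.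
- by [].
- by move=> V1 V2 a1 l1 a2 l2 _ H1 _ H2 [x|x] /=.
- by [].
- by move=> V a l i j Hj _ H x; case: ifP.
- move=> V W a l b m f [g fg gf] _ Hm _ H x.
  by rewrite -(gf x) Hm.
Qed.

Lemma cwl_mono k k' (V : finType) (a : rel V) l : cwl k a l -> k <= k' -> cwl k' a l.
Proof.
move=> H kk; elim: H => {V a l}.
- by move=> *; apply: cw_empty.
- by move=> V a l H1 H2 H3; apply: cw_vertex => // x; exact: leq_trans (H3 x) kk.
- by move=> *; apply: cw_union.
- by move=> *; apply: cw_join.
- by move=> V a l i j Hj _ H; apply: cw_relab => //; exact: leq_trans Hj kk.
- by move=> V W a l b m f *; apply: (@cw_iso _ _ _ a l b m f).
Qed.

Lemma inj_surj_bij (T T' : finType) (f : T -> T') :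
  injective f -> (forall y, exists x, f x = y) -> bijective f.
Proof.
move=> fi fs; apply: inj_card_bij => //.
rewrite -(card_codom fi); apply: subset_leq_card; apply/subsetP=> y _.
by have [x <-] := fs y; exact: codom_f.
Qed.

Lemma add_vertex K (T : finType) (b : rel T) (m : T -> nat) (P P' q : nat) (att : bool) :
 cwl K b m -> P < K -> P' < K -> P != P' -> q != P' -> (forall x, m x != P') ->
 cwl K (fun x y : T + unit => match x, y with
     | inl u, inl v => b u v
     | inl u, inr _ => (m u == P) || att && (m u == q)
     | inr _, inl u => (m u == P) || att && (m u == q)
     | inr _, inr _ => false end) (sum_lab m (fun _ => P)).
Proof.
move=> H HP HP' nPP' nqP' Hm.
have e1 : (P == P') = false by apply/negbTE.
have e2 : (P' == P) = false by rewrite eq_sym e1.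
have e3 : (q == P') = false by apply/negbTE.
have e4 : (P' == q) = false by rewrite eq_sym e3.
have e5 : forall u, (m u == P') = false by move=> u; apply/negbTE.
have H0 : cwl K (fun _ _ : unit => false) (fun _ => P').
  by apply: cw_vertex => //; rewrite card_unit.
have H1 := cw_union H H0.
have H2 := cw_join nPP' H1.
case: att.
- have H3 := cw_join nqP' H2.
  have H4 := cw_relab P' HP H3.
  apply: cwl_ext H4.
  + by move=> [u|[]] [v|[]] /=; rewrite ?eqxx ?e1 ?e2 ?e3 ?e4 ?e5 ?andbF ?andbT ?orbF ?andbF.
  + by move=> [u|[]] /=; rewrite ?eqxx ?e5.
- have H4 := cw_relab P' HP H2.
  apply: cwl_ext H4.
  + by move=> [u|[]] [v|[]] /=; rewrite ?eqxx ?e1 ?e2 ?e5 ?andbF ?andbT ?orbF ?andbF.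
  + by move=> [u|[]] /=; rewrite ?eqxx ?e5.
Qed.

Definition extrel (V W : finType) (a : rel V) (r : W -> V -> bool) : rel (V + W)%type :=
  fun x y => match x, y with
  | inl u, inl v => a u v
  | inl u, inr w => r w u
  | inr w, inl u => r w u
  | inr w, inr w' => w != w' end.

Definition extlab (V W : finType) (l : V -> nat) (P : nat) (x : (V + W)%type) : nat :=
  match x with inl u => l u | inr _ => P end.

Lemma ext_step k (V W : finType) (a : rel V) (l : V -> nat) (r : W -> V -> bool) (w0 : W)
  (att : bool) (q : nat) :
  (forall u, l u < k) -> q != k.+1 -> (forall u, r w0 u = att && (l u == q)) ->
  cwl k.+2 (extrel a (fun (w : {w : W | w != w0}) u => r (val w) u)) (extlab l k) ->
  cwl k.+2 (extrel a r) (extlab l k).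
Proof.
move=> Hl Hq Hatt H.
have Hm : forall x : (V + {w : W | w != w0})%type, extlab l k x != k.+1.
  move=> [u|w] /=; last by rewrite neq_ltn ltnSn.
  by rewrite neq_ltn ltnS ltnW.
have H1 := add_vertex att H (ltnW (ltnSn k.+1)) (ltnSn k.+1) (negbT (ltn_eqF (ltnSn k))) Hq Hm.
pose F (x : ((V + {w : W | w != w0}) + unit)%type) : (V + W)%type :=
  match x with inl (inl u) => inl u | inl (inr w) => inr (val w) | inr _ => inr w0 end.
apply: (cw_iso (f := F) _ _ _ (cwl_mono H1 (leqnn _))).
- apply: inj_surj_bij.
  + move=> [[u|w]|[]] [[u'|w']|[]] //= [].
    * by move=> ->.
    * by move/val_inj=> ->.
    * by move=> e; move: (valP w); rewrite /= e eqxx.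
    * by move=> e; move: (valP w'); rewrite /= -e eqxx.
  + move=> [u|w]; first by exists (inl (inl u)).
    case: (eqVneq w w0) => [->|h]; first by exists (inr tt).
    by exists (inl (inr (exist _ w h))).
- move=> [[u|w]|[]] [[u'|w']|[]] //=.
  + by rewrite Hatt (ltn_eqF (Hl u)).
  + by rewrite (valP w) eqxx.
  + by rewrite Hatt (ltn_eqF (Hl u')).
  + by rewrite eq_sym (valP w') eqxx.
  + by rewrite eqxx.
- by move=> [[u|w]|[]].
Qed.

Lemma ext_base k (V : finType) (a : rel V) l : cwl k a l -> (forall x y : V, x = y) ->
  forall n (W : finType) (r : W -> V -> bool), #|W| = n -> cwl k.+2 (extrel a r) (extlab l k).
Proof.
move=> H Hs n; elim: n => [|n IH] W r HW.
- apply: (cw_iso (f := inl) _ _ _ (cwl_mono H (leqW (leqnSn k)))) => //.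
  apply: inj_surj_bij; first by move=> x y [].
  move=> [u|w]; first by exists u.
  by move: (max_card (pred1 w)); rewrite HW card1.
- have Hl := cwl_lab H.
  have [w0 _] : exists w0, w0 \in W by apply/card_gt0P; rewrite HW.
  have HW' : #|{: {w : W | w != w0}}| = n.
    by rewrite card_sig -[n]/(n.+1.-1) -HW -(cardC1 w0); apply: eq_card.
  have IH' := IH _ (fun (w : {w : W | w != w0}) u => r (val w) u) HW'.
  case: (pickP (fun _ : V => true)) => [v0 _|Hn].
  + apply: (@ext_step _ _ _ _ _ r w0 (r w0 v0) (l v0)) => //.
    * by rewrite neq_ltn ltnS ltnW ?Hl.
    * by move=> u; rewrite (Hs u v0) eqxx andbT.
  + apply: (@ext_step _ _ _ _ _ r w0 false k) => //.
    * by rewrite neq_ltn ltnSn.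
    * by move=> u; move: (Hn u).
Qed.

Lemma ext_union k (V1 V2 : finType) (a1 : rel V1) l1 (a2 : rel V2) l2 :
  cwl k a1 l1 -> cwl k a2 l2 ->
  (forall (W : finType) (r : W -> V1 -> bool), (forall w u v, r w u -> r w v -> u = v) ->
     cwl k.+2 (extrel a1 r) (extlab l1 k)) ->
  (forall (W : finType) (r : W -> V2 -> bool), (forall w u v, r w u -> r w v -> u = v) ->
     cwl k.+2 (extrel a2 r) (extlab l2 k)) ->
  forall (W : finType) (r : W -> (V1 + V2)%type -> bool), (forall w u v, r w u -> r w v -> u = v) ->
  cwl k.+2 (extrel (sum_rel a1 a2) r) (extlab (sum_lab l1 l2) k).
Proof.
move=> C1 C2 IH1 IH2 W r Hr.
have Hl1 := cwl_lab C1; have Hl2 := cwl_lab C2.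
pose E w := [exists v2, r w (inr v2)].
have H1 := IH1 {w : W | ~~ E w} (fun w v => r (val w) (inl v)).
have H2 := IH2 {w : W | E w} (fun w v => r (val w) (inr v)).
have {H1}H1 : cwl k.+2 _ _ := H1 (fun w u v h1 h2 => ltac:(by case: (Hr _ _ _ h1 h2))).
have {H2}H2 : cwl k.+2 _ _ := H2 (fun w u v h1 h2 => ltac:(by case: (Hr _ _ _ h1 h2))).
have H2' := cw_relab k (ltnSn k.+1) H2.
have H3 := cw_union H1 H2'.
have H4 := cw_join (negbT (ltn_eqF (ltnSn k))) H3.
have H5 := cw_relab k.+1 (leqW (ltnSn k)) H4.
have F1 : forall (w : {w : W | E w}) u, r (val w) (inl u) = false.
  move=> [w /= /existsP [v2 h]] u; apply/negbTE/negP=> h'.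
  by have := Hr _ _ _ h h'.
have F2 : forall (w : {w : W | ~~ E w}) v, r (val w) (inr v) = false.
  move=> [w /= h] v; apply/negbTE/negP=> h'.
  by move: h; rewrite negb_exists => /forallP /(_ v); rewrite h'.
have L1 : forall u, (l1 u == k) = false by move=> u; rewrite ltn_eqF.
have L2 : forall u, (l2 u == k) = false by move=> u; rewrite ltn_eqF.
have L1' : forall u, (l1 u == k.+1) = false by move=> u; rewrite ltn_eqF // ltnS ltnW.
have L2' : forall u, (l2 u == k.+1) = false by move=> u; rewrite ltn_eqF // ltnS ltnW.
have K1 : (k == k.+1) = false by rewrite ltn_eqF.
have K2 : (k.+1 == k) = false by rewrite eq_sym K1.
pose F (x : ((V1 + {w : W | ~~ E w}) + (V2 + {w : W | E w}))%type) : ((V1 + V2) + W)%type :=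
  match x with
  | inl (inl u) => inl (inl u) | inl (inr w) => inr (val w)
  | inr (inl v) => inl (inr v) | inr (inr w) => inr (val w) end.
apply: (cw_iso (f := F) _ _ _ H5).
- apply: inj_surj_bij.
  + move=> [[u|w]|[u|w]] [[u'|w']|[u'|w']] //= [] e; (try by rewrite e);
      (try by rewrite (val_inj e)); (try by move: (valP w); rewrite /= e (valP w'));
      try by move: (valP w'); rewrite /= -e (valP w).
  + move=> [[u|v]|w]; first by exists (inl (inl u)).
    * by exists (inr (inl v)).
    case: (boolP (E w)) => h.
    * by exists (inr (inr (exist _ w h))).
    * by exists (inl (inr (exist _ w h))).
- move=> [[u|w]|[u|w]] [[u'|w']|[u'|w']] /=;
    rewrite ?L1 ?L2 ?L1' ?L2' ?K1 ?K2 ?eqxx ?F1 ?F2 ?andbF ?orbF ?andbT //=.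
  + by apply/eqP=> e; move: (valP w); rewrite /= e (valP w').
  + by apply/eqP=> e; move: (valP w'); rewrite /= -e (valP w).
  + by rewrite K2 !orbF.
- by move=> [[u|w]|[u|w]] /=; rewrite ?L1 ?L2 ?L1' ?L2' ?K1 ?K2 ?eqxx.
Qed.


Lemma cwl_extp k (V : finType) (a : rel V) l : cwl k a l ->
  forall (W : finType) (r : W -> V -> bool), (forall w u v, r w u -> r w v -> u = v) ->
  cwl k.+2 (extrel a r) (extlab l k).
Proof.
elim=> {V a l}.
- move=> V a l HV W r _; eapply ext_base; [exact: (cw_empty k a l HV) | | exact: erefl].
  by move=> x; move: (max_card (pred1 x)); rewrite HV card1.
- move=> V a l HV Ha Hl' W r _; eapply ext_base; [exact: (cw_vertex HV Ha Hl') | | exact: erefl].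
  by move=> x y; have /fintype_le1P := eq_leq HV; move=> /(_ y) ->.
- by move=> V1 V2 a1 l1 a2 l2 C1 IH1 C2 IH2; apply: ext_union.
- move=> V a l i j nij C IH W r Hr; have Hl := cwl_lab C.
  have Lk : forall u, (l u == k) = false by move=> u; rewrite ltn_eqF.
  case: (boolP ((i != k) && (j != k))) => [/andP [hi hj] | h].
  + have Ki : (k == i) = false by rewrite eq_sym; apply/negbTE.
    have Kj : (k == j) = false by rewrite eq_sym; apply/negbTE.
    apply: cwl_ext (cw_join nij (IH W r Hr)) => //.
    by move=> [u|w] [v|w'] /=; rewrite ?Ki ?Kj ?andbF ?orbF.
  + apply: cwl_ext (IH W r Hr) => //.
    move: h; rewrite negb_and !negbK => /orP [] /eqP -> [u|w] [v|w'] //=;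
      by rewrite ?Lk ?andbF ?orbF.
- move=> V a l i j Hj C IH W r Hr; have Hl := cwl_lab C.
  case: (eqVneq i k) => [->|hi].
  + apply: cwl_ext (IH W r Hr) => //.
    by move=> [u|w] //=; rewrite ltn_eqF.
  + have Ki : (k == i) = false by rewrite eq_sym; apply/negbTE.
    apply: cwl_ext (cw_relab i (leq_trans Hj (leqW (leqnSn k))) (IH W r Hr)) => //.
    by move=> [u|w] //=; rewrite Ki.
- move=> V V0 a l b m f bf Hb Hm C IH W r Hr.
  have fi := bij_inj bf.
  have H := IH W (fun w v => r w (f v)) (fun w u v h1 h2 => fi _ _ (Hr _ _ _ h1 h2)).
  pose F (x : (V + W)%type) : (V0 + W)%type := match x with inl u => inl (f u) | inr w => inr w end.
  apply: (cw_iso (f := F) _ _ _ H).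
  + apply: inj_surj_bij.
    * by move=> [u|w] [u'|w'] //= [] => [/fi|] ->.
    * case: bf => g fg gf [y|w]; last by exists (inr w).
      by exists (inl (g y)); rewrite /= gf.
  + by move=> [u|w] [u'|w'] /=; rewrite ?Hb.
  + by move=> [u|w] /=.
Qed.

Lemma EL1 k (b : bool) (n i : nat) : n < k -> i < k ->
  ((if b then n + k else n) == i) = ~~ b && (n == i).
Proof.
case: b => //= hn hi; apply/negbTE; rewrite neq_ltn; apply/orP; right.
exact: leq_trans hi (leq_addl _ _).
Qed.

Lemma EL2 k (b : bool) (n i : nat) : n < k -> i < k ->
  ((if b then n + k else n) == i + k) = b && (n == i).
Proof.
case: b => /= hn hi; first by rewrite eqn_add2r.
apply/negbTE; rewrite neq_ltn; apply/orP; left; exact: leq_trans hn (leq_addl _ _).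
Qed.

Lemma cwl_split k (V : finType) (a : rel V) l : cwl k a l ->
  forall c : V -> bool, cwl (k + k) a (fun x => if c x then l x + k else l x).
Proof.
elim=> {V a l}.
- by move=> V a l HV c; apply: cw_empty.
- move=> V a l HV Ha Hl c; apply: cw_vertex => // x.
  case: (c x); first by rewrite ltn_add2r.
  exact: leq_trans (Hl x) (leq_addr _ _).
- move=> V1 V2 a1 l1 a2 l2 C1 IH1 C2 IH2 c.
  apply: cwl_ext (cw_union (IH1 (fun x => c (inl x))) (IH2 (fun x => c (inr x)))) => //.
  by move=> [u|v].
- move=> V a l i j nij C IH c; have Hl := cwl_lab C.
  case: (boolP ((i < k) && (j < k))) => [/andP [hi hj] | h].
  + have n1 : i + k != j by rewrite neq_ltn (leq_trans hj (leq_addl _ _)) orbT.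
    have n2 : i != j + k by rewrite neq_ltn (leq_trans hi (leq_addl _ _)).
    have n3 : i + k != j + k by rewrite eqn_add2r.
    have H := cw_join n3 (cw_join n2 (cw_join n1 (cw_join nij (IH c)))).
    apply: cwl_ext H => // x y.
    rewrite !EL2 ?Hl // !EL1 ?Hl //.
    by case: (c x); case: (c y); case: (l x == i); case: (l x == j); case: (l y == i);
       case: (l y == j); case: (a x y).
  + apply: cwl_ext (IH c) => // x y.
    move: h; rewrite negb_and -!leqNgt => /orP [] h;
      by rewrite ?(ltn_eqF (leq_trans (Hl _) h)) ?andbF ?orbF.
- move=> V a l i j Hj C IH c; have Hl := cwl_lab C.
  case: (ltnP i k) => hi.
  + have Hj' : j + k < k + k by rewrite ltn_add2r.
    have H := cw_relab (i + k) Hj' (cw_relab i (leq_trans Hj (leq_addr _ _)) (IH c)).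
    refine (cwl_ext _ _ H) => // x.
    case: (c x) => /=.
    * have -> : (l x + k == i) = false by rewrite (EL1 true) ?Hl.
      by rewrite eqn_add2r; case: (l x == i).
    * case: (l x == i); rewrite ltn_eqF //; exact: leq_trans _ (leq_addl _ _).
  + refine (cwl_ext _ _ (IH c)) => // x.
    by rewrite (ltn_eqF (leq_trans (Hl _) hi)).
- move=> V W a l b m f bf Hb Hm C IH c.
  apply: (cw_iso bf Hb _ (IH (fun x => c (f x)))).
  by move=> x; rewrite Hm.
Qed.

Lemma rngS c0 n m : (c0 <= m < c0 + n.+1) = (c0 <= m < c0 + n) || (m == c0 + n).
Proof. by apply/idP/idP => [/andP [h1 h2]|/orP [/andP [h1 h2]|/eqP h]]; lia. Qed.

Lemma cwl_joins K (T : finType) (b : rel T) (m : T -> nat) (P c0 : nat) : cwl K b m ->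
  forall n, ~~ (c0 <= P < c0 + n) ->
  cwl K (fun x y => [|| b x y, (m x == P) && (c0 <= m y < c0 + n) | (m y == P) && (c0 <= m x < c0 + n)]) m.
Proof.
move=> H; elim=> [|n IH] hP.
- refine (cwl_ext _ _ H) => // x y.
  by rewrite addn0 !ltnNge !andbN !andbF !orbF.
- have hP' : ~~ (c0 <= P < c0 + n) by apply: contra hP; rewrite rngS => ->.
  have nP : P != c0 + n by apply: contra hP; rewrite rngS => ->; rewrite orbT.
  refine (cwl_ext _ _ (cw_join nP (IH hP'))) => // x y.
  rewrite !rngS.
  by case: (b x y); case: (m x == P); case: (m y == P); case: (c0 <= m x < c0 + n);
     case: (c0 <= m y < c0 + n); case: (m x == c0 + n); case: (m y == c0 + n).
Qed.

Definition isV (H G0 : sgraph) (phi : vert H -> Qvert G0) (x : vert H) : bool :=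
  if phi x is inl _ then true else false.

Definition nbset (H G0 : sgraph) (phi : vert H -> Qvert G0) (z : vert H) :
  {set {x : vert H | isV phi x}} := [set u | adj z (val u)].

Definition E2 (H G0 : sgraph) (phi : vert H -> Qvert G0) (z : vert H) : bool :=
  ~~ isV phi z && (#|nbset phi z| == 2).

Definition adjG (H G0 : sgraph) (phi : vert H -> Qvert G0) : rel {x : vert H | isV phi x} :=
  fun u v => (u != v) && [exists z, E2 phi z && (nbset phi z == [set u; v])].

Lemma adjG_sym H G0 phi : symmetric (@adjG H G0 phi).
Proof. by move=> u v; rewrite /adjG eq_sym setUC. Qed.

Lemma adjG_irr H G0 phi : irreflexive (@adjG H G0 phi).
Proof. by move=> u; rewrite /adjG eqxx. Qed.

Definition Gp H G0 phi : sgraph := SGraph (@adjG_sym H G0 phi) (@adjG_irr H G0 phi).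

Lemma two_set (T : finType) (A : {set T}) p q t1 t2 : A = [set p; q] -> p != q ->
  t1 != t2 -> t1 \in A -> t2 \in A -> A = [set t1; t2].
Proof.
move=> HA pq t12 h1 h2; apply/eqP; rewrite eq_sym eqEcard.
rewrite HA !cards2 pq t12 leqnn andbT -HA.
by apply/subsetP=> x; rewrite !inE => /orP [] /eqP ->.
Qed.

Lemma getT H G0 (phi : vert H -> Qvert G0) (u : {x : vert H | isV phi x}) :
  exists t, phi (val u) = inl t.
Proof. by case: u => x /=; rewrite /isV; case: (phi x) => // t _; exists t. Qed.

Lemma edge2 (G0 : sgraph) (A : {set vert G0}) : is_edge A -> exists p q, p != q /\ A = [set p; q].
Proof.
case/existsP=> p /existsP [q /andP [hpq /eqP ->]]; exists p, q; split => //.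
by apply/eqP=> e; move: hpq; rewrite e (adj_irr).
Qed.

Lemma notV H G0 (phi : vert H -> Qvert G0) z : ~~ isV phi z -> exists e, phi z = inr e.
Proof. by rewrite /isV; case: (phi z) => // e _; exists e. Qed.

Lemma L2 H G0 (phi : vert H -> Qvert G0) (Hinj : injective phi)
  (Hadj : forall x y, adj x y = Qadj (phi x) (phi y)) z u1 u2 e :
  phi z = inr e -> u1 != u2 -> u1 \in nbset phi z -> u2 \in nbset phi z ->
  exists t1 t2, [/\ phi (val u1) = inl t1, phi (val u2) = inl t2 & val e = [set t1; t2]].
Proof.
move=> Ez n12; rewrite !inE !Hadj Ez.
have [t1 E1] := getT u1; have [t2 E2'] := getT u2; rewrite E1 E2' /= => h1 h2.
exists t1, t2; split => //.
have [p [q [pq Ep]]] := edge2 (valP e).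
apply: two_set Ep pq _ h1 h2.
by apply: contra n12 => /eqP et; apply/eqP/val_inj/Hinj; rewrite E1 E2' et.
Qed.

Lemma L3 H G0 (phi : vert H -> Qvert G0) (Hinj : injective phi)
  (Hadj : forall x y, adj x y = Qadj (phi x) (phi y)) z u1 u2 u3 :
  ~~ isV phi z -> u1 != u2 -> u1 \in nbset phi z -> u2 \in nbset phi z -> u3 \in nbset phi z ->
  u3 = u1 \/ u3 = u2.
Proof.
move=> /notV [e Ez] n12 h1 h2 h3.
have [t1 [t2 [E1 E2' Ee]]] := L2 Hinj Hadj Ez n12 h1 h2.
move: h3; rewrite inE Hadj Ez; have [t3 E3] := getT u3; rewrite E3 /= Ee !inE.
by case/orP=> /eqP et; [left|right]; apply/val_inj/Hinj; rewrite E3 et ?E1 ?E2'.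
Qed.

Lemma E2_inj H G0 (phi : vert H -> Qvert G0) (Hinj : injective phi)
  (Hadj : forall x y, adj x y = Qadj (phi x) (phi y)) z z' :
  E2 phi z -> E2 phi z' -> nbset phi z = nbset phi z' -> z = z'.
Proof.
move=> /andP [/notV [e Ez] /cards2P [u1 [u2 [n12 Ens]]]] /andP [/notV [e' Ez'] _] Enn.
have h1 : u1 \in nbset phi z by rewrite Ens !inE eqxx.
have h2 : u2 \in nbset phi z by rewrite Ens !inE eqxx orbT.
have [t1 [t2 [E1 E2' Ee]]] := L2 Hinj Hadj Ez n12 h1 h2.
rewrite Enn in h1 h2.
have [t1' [t2' [E1' E2'' Ee']]] := L2 Hinj Hadj Ez' n12 h1 h2.
move: E1' E2''; rewrite E1 E2' => -[e1] [e2].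
apply: Hinj; rewrite Ez Ez'; congr inr; by apply/val_inj; rewrite /= Ee Ee' e1 e2.

Qed.

Lemma W_uniq H G0 (phi : vert H -> Qvert G0) (Hinj : injective phi)
  (Hadj : forall x y, adj x y = Qadj (phi x) (phi y)) z u v :
  ~~ isV phi z -> ~~ E2 phi z -> u \in nbset phi z -> v \in nbset phi z -> u = v.
Proof.
move=> hz hE hu hv; case: (eqVneq u v) => // nuv; exfalso.
have Ens : nbset phi z = [set u; v].
  apply/setP => x; rewrite !inE; apply/idP/idP => [hx|/orP [] /eqP ->]; last 2 first.
  - by move: hu; rewrite inE.
  - by move: hv; rewrite inE.
  have hx' : x \in nbset phi z by rewrite inE.
  by case: (L3 Hinj Hadj hz nuv hu hv hx') => ->; rewrite eqxx ?orbT.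
by move: hE; rewrite /E2 hz Ens cards2 nuv.
Qed.

Lemma adj_EE H G0 (phi : vert H -> Qvert G0) (Hinj : injective phi)
  (Hadj : forall x y, adj x y = Qadj (phi x) (phi y)) z z' :
  ~~ isV phi z -> ~~ isV phi z' -> adj z z' = (z != z').
Proof.
move=> /notV [e Ez] /notV [e' Ez'].
by rewrite Hadj -(inj_eq Hinj) Ez Ez'.
Qed.

Lemma adj_VV H G0 (phi : vert H -> Qvert G0) (Hinj : injective phi)
  (Hadj : forall x y, adj x y = Qadj (phi x) (phi y)) x y :
  isV phi x -> isV phi y -> adj x y = (x != y).
Proof.
rewrite Hadj -(inj_eq Hinj) /isV.
by case: (phi x) => // t _; case: (phi y) => // t' _.
Qed.

Lemma ex_dflt H G0 (phi : vert H -> Qvert G0) (e : {A : {set vert (Gp phi)} | is_edge A}) :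
  exists z : vert H, true.
Proof. by case: e => A /= /existsP [x _]; exists (val x). Qed.

Definition gmap H G0 (phi : vert H -> Qvert G0) (q : Qvert (Gp phi)) : vert H :=
  match q with
  | inl u => val u
  | inr e => odflt (xchoose (ex_dflt e)) [pick z | E2 phi z && (nbset phi z == val e)]
  end.

Lemma g_spec H G0 (phi : vert H -> Qvert G0) e :
  E2 phi (gmap (inr e)) && (nbset phi (gmap (inr e)) == val e).
Proof.
rewrite /gmap; case: pickP => // none; exfalso.
case: e none => A /= /existsP [x /existsP [y /andP [/andP [_ /existsP [z /andP [h1 /eqP h2]]] /eqP EA]]] none.
by move: (none z); rewrite h1 h2 EA eqxx.
Qed.

Lemma g_inj H G0 (phi : vert H -> Qvert G0) (Hinj : injective phi)
  (Hadj : forall x y, adj x y = Qadj (phi x) (phi y)) : injective (@gmap H G0 phi).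
Proof.
move=> [u|e] [u'|e'].
- by move=> /= /val_inj ->.
- move=> E; have /andP [/andP [hv _] _] := g_spec e'; move: hv; rewrite -E /=.
  by rewrite (valP u).
- move=> E; have /andP [/andP [hv _] _] := g_spec e; move: hv; rewrite E /=.
  by rewrite (valP u').
- move=> E; have /andP [h1 /eqP n1] := g_spec e; have /andP [h2 /eqP n2] := g_spec e'.
  by congr inr; apply/val_inj; rewrite -n1 -n2 E.
Qed.

Lemma gV H G0 (phi : vert H -> Qvert G0) e u :
  adj (@gmap H G0 phi (inr e)) (val u) = (u \in val e).
Proof. by have /andP [_ /eqP n] := g_spec e; rewrite -n inE. Qed.

Lemma g_adj H G0 (phi : vert H -> Qvert G0) (Hinj : injective phi)
  (Hadj : forall x y, adj x y = Qadj (phi x) (phi y)) (q q' : Qvert (Gp phi)) :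
  adj (gmap q) (gmap q') = Qadj q q'.
Proof.
have gi := g_inj Hinj Hadj.
case: q q' => [u|e] [u'|e'].
- by rewrite /= (adj_VV Hinj Hadj (valP u) (valP u')).
- by change (adj (val u) (gmap (inr e')) = (u \in val e')); rewrite adj_sym gV.
- by change (adj (gmap (inr e)) (val u') = (u' \in val e)); rewrite gV.
- have /andP [/andP [h1 _] _] := g_spec e; have /andP [/andP [h2 _] _] := g_spec e'.
  by rewrite (adj_EE Hinj Hadj h1 h2) (inj_eq gi).
Qed.

Theorem lemma4p2 (X : sgraph -> Prop) :
  hereditary X -> (forall G, X G -> in_Qstar G) ->
  (cw_bounded X <-> cw_bounded (fun G => X G /\ is_Qgraph G)).
Proof.
move=> hX hQ; split.
  by case=> c hc; exists c => G [hG _]; exact: hc.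
case=> c hc; exists (c + c).+2 => H hH.
have [G0 [phi [Hinj Hadj0]]] := hQ H hH.
have Hadj : forall x y, adj x y = Qadj (phi x) (phi y) := Hadj0.
have gi := g_inj Hinj Hadj.
have XK : X (Q (Gp phi)).
  apply: hX hH _; exists (@gmap H G0 phi); split => // x y.
  by rewrite (g_adj Hinj Hadj).
have [l Cl] : cw_le c (Q (Gp phi)).
  apply: hc; split => //; exists (Gp phi); exists id; split => //.
  exact: (Bijective (g := id)).
have Hl := cwl_lab Cl.
pose cls (q : Qvert (Gp phi)) := if q is inr _ then true else false.
have C1 := cwl_split Cl cls.
pose W := {z : vert H | ~~ isV phi z && ~~ E2 phi z}.
pose r (w : W) (q : Qvert (Gp phi)) := if q is inl u then adj (val w) (val u) else false.
have runiq : forall w q q', r w q -> r w q' -> q = q'.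
  move=> [w /andP [h1 h2]] [u|e] [u'|e'] //= hu hu'.
  by rewrite (W_uniq Hinj Hadj h1 h2 (u := u) (v := u')) // inE.
have C2 := cwl_extp C1 runiq.
have C3 := cwl_joins C2 (P := c + c) (c0 := c) (n := c) (ltac:(by rewrite ltnn andbF)).
pose F (x : (Qvert (Gp phi) + W)%type) : vert H :=
  match x with inl q => gmap q | inr w => val w end.
have bijF : bijective F.
  apply: inj_surj_bij.
  - move=> [q|w] [q'|w'] /=.
    + by move/gi=> ->.
    + case: w' => w' hw' E; have /andP [h1 h2] := hw'; exfalso; case: q E => [u|e] /= E.
        by move: h1; rewrite -E (valP u).
      have /andP [h _] := g_spec e; by move: h2; rewrite -E h.
    + case: w => w hw E; have /andP [h1 h2] := hw; exfalso; case: q' E => [u|e] /= E.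
        by move: h1; rewrite E (valP u).
      have /andP [h _] := g_spec e; by move: h2; rewrite E h.
    + by move/val_inj=> ->.
  - move=> z; case: (boolP (isV phi z)) => hv.
      by exists (inl (inl (exist _ z hv))).
    case: (boolP (E2 phi z)) => he; last first.
      by exists (inr (exist _ z (introT andP (conj hv he)))).
    have hedge : is_edge (G := Gp phi) (nbset phi z).
      move: (he) => /andP [_ /cards2P [u1 [u2 [n12 Ens]]]].
      apply/existsP; exists u1; apply/existsP; exists u2; rewrite Ens eqxx andbT.
      rewrite /= /adjG n12 /=; apply/existsP; exists z; by rewrite he Ens eqxx.
    exists (inl (inr (exist (fun A => is_edge (G := Gp phi) A) _ hedge))); rewrite /=.
    have /andP [h1 /eqP h2] := g_spec (exist (fun A => is_edge (G := Gp phi) A) _ hedge).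
    exact: (E2_inj Hinj Hadj h1 he h2).
have LL1 : forall q, (extlab (fun x : vert (Q (Gp phi)) => if cls x then l x + c else l x)
         (c + c) (inl q : (Qvert (Gp phi) + W)%type) == c + c) = false.
  move=> q /=; apply: ltn_eqF; case: (cls q); first by rewrite ltn_add2r.
  exact: leq_trans (Hl q) (leq_addr _ _).
have LL2 : forall q, (c <= extlab (fun x : vert (Q (Gp phi)) => if cls x then l x + c else l x)
         (c + c) (inl q : (Qvert (Gp phi) + W)%type) < c + c) = cls q.
  move=> q /=; case: (cls q); first by rewrite leq_addl ltn_add2r Hl.
  by rewrite leqNgt Hl.
case: (bijF) => Finv h1 h2.
exists (fun z => extlab (fun x : vert (Q (Gp phi)) => if cls x then l x + c else l x) (c + c) (Finv z)).
apply: (cw_iso bijF _ _ C3); last by move=> x; rewrite h1.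
move=> [q|w] [q'|w']; rewrite ?LL1 ?LL2 ?andbF ?orbF.
- by rewrite /= (g_adj Hinj Hadj).
- rewrite /= eqxx /= ?ltnn ?andbF /=.
  case: w' => w' hw'; have /andP [k1 k2] := hw'.
  case: q => [u|e] /=; first by rewrite adj_sym orbF.
  have /andP [/andP [k3 k4] _] := g_spec e.
  rewrite (adj_EE Hinj Hadj k3 k1); apply/eqP=> E; move/negP: k2; rewrite -E => k2; apply: k2; rewrite /E2 k3; exact: k4.
- rewrite /= ?eqxx /= ?orbF.

  case: w => w hw; have /andP [k1 k2] := hw.
  case: q' => [u|e] /=; first by rewrite orbF.
  have /andP [/andP [k3 k4] _] := g_spec e.
  rewrite (adj_EE Hinj Hadj k1 k3); apply/eqP=> E; move/negP: k2; rewrite E => k2; apply: k2; rewrite /E2 k3; exact: k4.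
- rewrite /= eqxx /= ?ltnn ?andbF ?orbF.
  case: w => w hw; have /andP [k1 _] := hw.
  case: w' => w' hw'; have /andP [k1' _] := hw'.
  by rewrite (adj_EE Hinj Hadj k1 k1').
Qed.
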